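(* If $C$ is a sorting network on $n$ channels with depth $d$, then there is a co-saturated sorting network $N$ on $n$ channels with depth $d$.
   Context: Channels are numbered $1,\ldots,n$. A comparator network on $n$ channels of depth $d$ is a sequence $C=L_1;\ldots;L_d$ of layers; each layer is a set of comparators $(i,j)$ with $1\le i<j\le n$, and each channel occurs in at most one comparator of a given layer. An input $\bar x\in\{0,1\}^n$ propagates as follows: $\bar x_0=\bar x$, and $\bar x_k$ is obtained from $\bar x_{k-1}$ by, for each $(i,j)\in L_k$, putting the minimum of the values at positions $i,j$ at position $i$ and the maximum at position $j$. The output is $C(\bar x)=\bar x_d$, and $C$ is a sorting network if $C(\bar x)$ is sorted in non-decreasing order for every $\bar x\in\{0,1\}^n$. A channel is used in layer $L_\ell$ if it occurs in a comparator of $L_\ell$. The last layer $L_d$ is in last layer normal form (llnf) if every comparator in $L_d$ is of the form $(i,i+1)$ and there is no $i<n$ with both $i$ and $i+1$ unused in $L_d$. The blocks (or $(d-1)$-blocks) of $C$ are the vertex sets of connected components of the graph on $\{1,\ldots,n\}$ with an edge $\{i,j\}$ for each comparator $(i,j)\in L_d$; when $L_d$ is in llnf, each block is either a single channel unused in $L_d$ or a pair $\{i,i+1\}$ with $(i,i+1)\in L_d$, and the blocks are ordered top to bottom as consecutive intervals. A sorting network of depth $d$ is co-saturated if: (i) its last layer is in llnf; (ii) there are no two consecutive blocks each of which contains a channel unused in layer $L_{d-1}$; and (iii) whenever $(i,i+1)\in L_d$ and channels $i$ and $i+1$ are both unused in $L_{d-1}$, the channels $i-1$ and $i+2$ (whenever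 they exist, i.e. lie in $\{1,\ldots,n\}$) are used in $L_d$. *)

(* Defs.v *)
(* Channels are numbered 1..n (as in the paper). *)
From mathcomp Require Import all_boot.
Set Implicit Arguments. Unset Strict Implicit. Unset Printing Implicit Defensive.

Definition comparator := (nat * nat)%type.
Definition comparator_ok (n : nat) (c : comparator) : bool :=
  (1 <= c.1) && (c.1 < c.2) && (c.2 <= n).

Definition layer := seq comparator.
Definition layer_channels (L : layer) : seq nat := flatten [seq [:: c.1; c.2] | c <- L].
Definition layer_ok (n : nat) (L : layer) : bool :=
  all (comparator_ok n) L && uniq (layer_channels L).

Definition network := seq layer.
Definition network_ok (n : nat) (C : network) : bool := all (layer_ok n) C.
Definition depth (C : network) : nat := size C.

Definition val_at (s : seq bool) (i : nat) : bool := nth false s i.-1.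

Definition apply_comp (s : seq bool) (c : comparator) : seq bool :=
  let a := val_at s c.1 in
  let b := val_at s c.2 in
  set_nth false (set_nth false s c.1.-1 (a && b)) c.2.-1 (a || b).

(* comparators of a layer are disjoint, so applying them sequentially is
   the same as applying them in parallel *)
Definition apply_layer (s : seq bool) (L : layer) : seq bool := foldl apply_comp s L.
Definition run (C : network) (s : seq bool) : seq bool := foldl apply_layer s C.

(* sorted in non-decreasing order (false = 0 < true = 1) *)
Definition sorted01 (s : seq bool) : bool := sorted (fun a b : bool => a ==> b) s.

Definition sorting_network (n : nat) (C : network) : Prop :=
  network_ok n C /\ forall x : n.-tuple bool, sorted01 (run C x).

Definition used (L : layer) (i : nat) : bool := i \in layer_channels L.

Definition last_layer (C : network) : layer := nth [::] C (size C).-1.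
Definition prev_layer (C : network) : layer :=
  if 2 <= size C then nth [::] C (size C - 2) else [::].

Definition llnf (n : nat) (L : layer) : bool :=
  all (fun c : comparator => c.2 == c.1.+1) L &&
  all (fun i => used L i || used L i.+1) (iota 1 n.-1).

(* The blocks (connected components of the graph of L) listed top to bottom;
   valid when L is in llnf: either a pair [i; i+1] with (i,i+1) in L,
   or a singleton [i] of a channel unused in L. *)
Fixpoint blocks_aux (fuel i n : nat) (L : layer) : seq (seq nat) :=
  match fuel with
  | 0 => [::]
  | f.+1 =>
      if n < i then [::]
      else if (i, i.+1) \in L then [:: i; i.+1] :: blocks_aux f i.+2 n L
      else [:: i] :: blocks_aux f i.+1 n L
  end.
Definition blocks (n : nat) (L : layer) : seq (seq nat) := blocks_aux n 1 n L.

Definition co_saturated (n : nat) (C : network) : Prop :=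
  let Ld := last_layer C in
  let Lp := prev_layer C in
  let bs := blocks n Ld in
  let has_unused (B : seq nat) := has (fun i => ~~ used Lp i) B in
  [/\ llnf n Ld,
      (forall k, k.+1 < size bs ->
         ~~ (has_unused (nth [::] bs k) && has_unused (nth [::] bs k.+1)))
    & (forall i, (i, i.+1) \in Ld -> ~~ used Lp i -> ~~ used Lp i.+1 ->
         (1 < i -> used Ld i.-1) /\ (i.+2 <= n -> used Ld i.+2))].

(* Main.v *)
Require Import Defs.
From mathcomp Require Import all_boot.
From mathcomp Require Import zify.
From Stdlib Require Import Classical.
Set Implicit Arguments. Unset Strict Implicit. Unset Printing Implicit Defensive.

Definition cok (c : comparator) := (0 < c.1) && (c.1 < c.2).

Lemma nth_comp s c k : cok c ->
  nth false (apply_comp s c) k =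
  if k == c.2.-1 then val_at s c.1 || val_at s c.2
  else if k == c.1.-1 then val_at s c.1 && val_at s c.2 else nth false s k.
Proof. by move=> _; rewrite /apply_comp nth_set_nth /= nth_set_nth. Qed.

Lemma size_comp s c : cok c -> c.2 <= size s -> size (apply_comp s c) = size s.
Proof. case/andP=> h1 h2 h3; rewrite /apply_comp !size_set_nth; lia. Qed.

Lemma cnt_set_nth (P : pred bool) s k v : k < size s ->
  count P (set_nth false s k v) + P (nth false s k) = count P s + P v.
Proof.
elim: s k => [|x s IH] [|k] //= hk.
  lia.
have := IH k hk; lia.
Qed.

Lemma count_comp (P : pred bool) s c : cok c -> c.2 <= size s ->
  count P (apply_comp s c) = count P s.
Proof.
move=> hc h2; case/andP: (hc) => h0 h1.
rewrite /apply_comp.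
set a := val_at s c.1; set b := val_at s c.2.
have e1 := @cnt_set_nth P s (c.1.-1) (a && b).
have e2 := @cnt_set_nth P (set_nth false s c.1.-1 (a && b)) c.2.-1 (a || b).
rewrite size_set_nth nth_set_nth /= in e2.
have hne : (c.2.-1 == c.1.-1) = false by apply/eqP; lia.
rewrite hne in e2.
move: e1 e2; rewrite -/(val_at s c.2) -/b -/(val_at s c.1) -/a.
have hk1 : c.1.-1 < size s by lia.
have hk2 : c.2.-1 < maxn (c.1.-1).+1 (size s) by lia.
move=> /(_ hk1) e1 /(_ hk2) e2.
case: a b e1 e2 => [] [] /=; lia.
Qed.

Definition disj (c d : comparator) :=
  [&& c.1 != d.1, c.1 != d.2, c.2 != d.1 & c.2 != d.2].

Lemma comp_comm s c d : cok c -> cok d -> disj c d -> c.2 <= size s -> d.2 <= size s ->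
  apply_comp (apply_comp s c) d = apply_comp (apply_comp s d) c.
Proof.
move=> hc hd hcd hcs hds.
case/andP: (hc) => c0 c1; case/andP: (hd) => d0 d1.
case/and4P: hcd => /eqP e1 /eqP e2 /eqP e3 /eqP e4.
apply: (@eq_from_nth _ false); first by rewrite !size_comp // ?size_comp.
move=> k _; rewrite !nth_comp // /val_at !nth_comp //.
have f1 : (d.1.-1 == c.2.-1) = false by apply/eqP; lia.
have f2 : (d.1.-1 == c.1.-1) = false by apply/eqP; lia.
have f3 : (d.2.-1 == c.2.-1) = false by apply/eqP; lia.
have f4 : (d.2.-1 == c.1.-1) = false by apply/eqP; lia.
have g1 : (c.1.-1 == d.2.-1) = false by apply/eqP; lia.
have g2 : (c.1.-1 == d.1.-1) = false by apply/eqP; lia.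
have g3 : (c.2.-1 == d.2.-1) = false by apply/eqP; lia.
have g4 : (c.2.-1 == d.1.-1) = false by apply/eqP; lia.
have [ek|h1] := eqVneq k d.2.-1; first by subst k; rewrite ?eqxx ?f1 ?f2 ?f3 ?f4 ?g1 ?g2 ?g3 ?g4.
have [ek|h2] := eqVneq k d.1.-1; first by subst k; rewrite ?eqxx ?(negbTE h1) ?f1 ?f2 ?f3 ?f4 ?g1 ?g2 ?g3 ?g4.
have [ek|h3] := eqVneq k c.2.-1; first by subst k; rewrite ?eqxx ?(negbTE h1) ?(negbTE h2) ?f1 ?f2 ?f3 ?f4 ?g1 ?g2 ?g3 ?g4.
have [ek|h4] := eqVneq k c.1.-1; first by subst k; rewrite ?eqxx ?(negbTE h1) ?(negbTE h2) ?(negbTE h3) ?f1 ?f2 ?f3 ?f4 ?g1 ?g2 ?g3 ?g4.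
by rewrite ?(negbTE h1) ?(negbTE h2) ?(negbTE h3) ?(negbTE h4).
Qed.

Lemma comp_id s c : cok c -> c.2 <= size s -> val_at s c.1 ==> val_at s c.2 ->
  apply_comp s c = s.
Proof.
move=> hc hs hab; case/andP: (hc) => c0 c1.
apply: (@eq_from_nth _ false); first by rewrite size_comp.
move=> k _; rewrite nth_comp //.
case: eqP => [->|_]; first by move: hab; rewrite /val_at; case: (nth _ _ _); case: (nth _ _ _).
case: eqP => [->|_] //; by move: hab; rewrite /val_at; case: (nth _ _ _); case: (nth _ _ _).
Qed.

Lemma sorted01_nseq s : sorted01 s -> s = nseq (count negb s) false ++ nseq (count id s) true.
Proof.
elim: s => [|b s IH] //= hs.
have hs' : sorted01 s by move: hs; rewrite /sorted01 /=; apply: path_sorted.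
case: b hs => /= hs.
  have : all (implb true) s.
    by apply: order_path_min => //; move=> [] [] [].
  move=> hall.
  have hc : count id s = size s by apply/eqP; rewrite -all_count.
  have e : count negb s = 0.
    have := count_predC id s; rewrite hc => h.
    by apply/eqP; rewrite -(eqn_add2l (size s)) addn0 -{2}h.
  rewrite e hc /=; congr (_ :: _); apply/all_pred1P.
  by apply: sub_all hall => -[].
by rewrite !add0n -(IH hs').
Qed.


Lemma sorted_nth s k : sorted01 s -> k < size s -> nth false s k = (count negb s <= k).
Proof.
move=> hs hk; rewrite {1}(sorted01_nseq hs) nth_cat size_nseq.
case: ltnP => h; first by rewrite nth_nseq h.
by rewrite nth_nseq; case: ltnP => //; rewrite (sorted01_nseq hs) size_cat !size_nseq in hk; lia.
Qed.

Lemma sorted_le s k l : sorted01 s -> k <= l -> l < size s -> nth false s k ==> nth false s l.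
Proof.
move=> hs hkl hl; rewrite !sorted_nth //; last by lia.
by apply/implyP => h; apply: leq_trans h hkl.
Qed.

Definition lok (L : layer) := all cok L && uniq (layer_channels L).

Lemma ch_cons c L : layer_channels (c :: L) = c.1 :: c.2 :: layer_channels L.
Proof. by []. Qed.

Lemma mem_ch x L : (x \in layer_channels L) = has (fun c => (x == c.1) || (x == c.2)) L.
Proof. by elim: L => [|c L IH] //=; rewrite ch_cons !inE IH orbA. Qed.

Lemma used_cons L c p : used (c :: L) p = [|| p == c.1, p == c.2 | used L p].
Proof. by rewrite /used ch_cons !inE. Qed.

Lemma used_in L c p : c \in L -> p = c.1 \/ p = c.2 -> used L p.
Proof. by move=> hc hp; rewrite /used mem_ch; apply/hasP; exists c => //; case: hp => ->; rewrite eqxx ?orbT. Qed.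

Lemma usedP L p : used L p -> exists2 c, c \in L & (p = c.1 \/ p = c.2).
Proof. by rewrite /used mem_ch => /hasP [c hc /orP [] /eqP ->]; exists c => //; [left|right]. Qed.

Lemma lok_cons c L : lok (c :: L) -> [/\ cok c, lok L, ~~ used L c.1, ~~ used L c.2 & c.1 != c.2].
Proof.
rewrite /lok ch_cons /= => /andP [/andP [hc hL] /= /andP [h1 /andP [h2 hu]]].
rewrite hc hL hu; split => //; first by move: h1; rewrite inE negb_or => /andP [].
by move: h1; rewrite inE negb_or => /andP [].
Qed.

Lemma lok_disj c L d : lok (c :: L) -> d \in L -> disj c d.
Proof.
move=> /lok_cons [_ _ h1 h2 _] hd.
have u1 : used L d.1 by apply: (used_in hd); left.
have u2 : used L d.2 by apply: (used_in hd); right.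
rewrite /disj; apply/and4P; split; apply/eqP => e.
- by move: h1; rewrite e u1.
- by move: h1; rewrite e u2.
- by move: h2; rewrite e u1.
- by move: h2; rewrite e u2.
Qed.

Lemma disjC c d : disj c d -> disj d c.
Proof. by rewrite /disj => /and4P [h1 h2 h3 h4]; rewrite !(eq_sym d.1) !(eq_sym d.2) h1 h3 h2 h4. Qed.

Lemma lok_disj2 L c d : lok L -> c \in L -> d \in L -> c != d -> disj c d.
Proof.
elim: L => [|e L IH] //= hL.
have [_ hL' _ _ _] := lok_cons hL.
rewrite !inE => /orP [/eqP ->|hc] /orP [/eqP ->|hd]; rewrite ?eqxx //.
- by move=> _; apply: lok_disj hL hd.
- by move=> _; apply/disjC; apply: lok_disj hL hc.
- by apply: IH.
Qed.

Definition lsz (L : layer) (s : seq bool) := all (fun c => c.2 <= size s) L.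

Lemma lsz_comp L s c : cok c -> c.2 <= size s -> lsz L s -> lsz L (apply_comp s c).
Proof. by move=> hc hs; rewrite /lsz size_comp. Qed.

Lemma size_layer L s : all cok L -> lsz L s -> size (apply_layer s L) = size s.
Proof.
elim: L s => [|c L IH] s //= /andP [hc hL] /andP [hs hLs].
by rewrite /apply_layer /= IH ?size_comp // /lsz size_comp.
Qed.

Lemma count_layer (P : pred bool) L s : all cok L -> lsz L s -> count P (apply_layer s L) = count P s.
Proof.
elim: L s => [|c L IH] s //= /andP [hc hL] /andP [hs hLs].
by rewrite /apply_layer /= IH ?count_comp // /lsz size_comp.
Qed.

Lemma layer_unused L s k : all cok L -> ~~ used L k.+1 -> nth false (apply_layer s L) k = nth false s k.
Proof.
elim: L s => [|c L IH] s //= /andP [hc hL]; rewrite used_cons !negb_or => /and3P [h1 h2 h3].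
rewrite /apply_layer /= IH // nth_comp //.
case/andP: hc => c0 c1.
have -> : (k == c.2.-1) = false by apply/eqP => e; move: h2; rewrite e; apply/negP; rewrite negbK; apply/eqP; lia.
have -> : (k == c.1.-1) = false by apply/eqP => e; move: h1; rewrite e; apply/negP; rewrite negbK; apply/eqP; lia.
by [].
Qed.

Lemma layer_unused_val L s p : all cok L -> 0 < p -> ~~ used L p -> val_at (apply_layer s L) p = val_at s p.
Proof. by move=> hL hp hu; rewrite /val_at layer_unused // prednK. Qed.

Lemma layer_comm L s c : cok c -> c.2 <= size s -> ~~ used L c.1 -> ~~ used L c.2 -> lok L -> lsz L s ->
  apply_layer (apply_comp s c) L = apply_comp (apply_layer s L) c.
Proof.
elim: L s => [|d L IH] s //= hc hcs; rewrite !used_cons !negb_or => /and3P [h1 h2 h3] /and3P [h4 h5 h6] hL /andP [hds hLs].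
have [hd hL' _ _ _] := lok_cons hL.
rewrite /apply_layer /= -comp_comm //.
- by have := IH (apply_comp s d); rewrite /apply_layer => -> //; rewrite ?size_comp // /lsz size_comp.
- by rewrite /disj !(eq_sym d.1) !(eq_sym d.2) h1 h2 h4 h5.
Qed.

Lemma predn_neq a b : 0 < a -> a < b -> (a.-1 == b.-1) = false.
Proof. move=> h1 h2; apply/eqP; lia. Qed.

Lemma layer_extract L s c : lok L -> lsz L s -> c \in L ->
  apply_layer s L = apply_layer (apply_comp s c) (filter (predC1 c) L).
Proof.
elim: L s => [|d L IH] s //= hL /andP [hds hLs].
have [hd hL' u1 u2 _] := lok_cons hL.
rewrite inE => hcL.
case: (eqVneq d c) => [edc|ndc].
  subst d; rewrite /=.
  suff -> : filter (predC1 c) L = L by [].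
  apply/all_filterP/allP => e he /=; apply/eqP => ee; subst e.
  by move: u1; rewrite (used_in he (or_introl erefl)).
have hc : c \in L by move: hcL; rewrite eq_sym (negbTE ndc).
rewrite /=.
have := IH (apply_comp s d); rewrite /apply_layer => -> //; last by rewrite /lsz size_comp.
have hdc := lok_disj hL hc.
have hcc : cok c by move: hL'; rewrite /lok => /andP [/allP h _]; apply: h.
have hcs : c.2 <= size s by move/allP: hLs; apply.
rewrite comp_comm //; exact: disjC.
Qed.

Lemma filter_lok L P : lok L -> lok (filter P L).
Proof.
elim: L => [|c L IH] //= hL.
have [hc hL' u1 u2 ne] := lok_cons hL.
case: (P c) => //; last by apply: IH.
rewrite /lok ch_cons /= hc /=.
have hf := IH hL'; move: (hf); rewrite /lok => /andP [-> ->]; rewrite andbT /= !inE negb_or ne /=.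
have sub p : used (filter P L) p -> used L p.
  by move=> /usedP [e]; rewrite mem_filter => /andP [_ he] hp; apply: used_in he hp.
apply/andP; split; apply/negP => h.
- by move: u1; rewrite (sub _ h).
- by move: u2; rewrite (sub _ h).
Qed.

Lemma used_filter L P p : used (filter P L) p -> used L p.
Proof. by move=> /usedP [e]; rewrite mem_filter => /andP [_ he] hp; apply: used_in he hp. Qed.

Lemma lok_in L c : lok L -> c \in L -> cok c.
Proof. by rewrite /lok => /andP [/allP h _]; apply: h. Qed.

Lemma unused_filter L c : lok L -> c \in L -> ~~ used (filter (predC1 c) L) c.1 /\ ~~ used (filter (predC1 c) L) c.2.
Proof.
move=> hL hc; split; apply/negP => /usedP [e]; rewrite mem_filter => /andP [/= ne he] hp.
- have := lok_disj2 hL hc he; rewrite eq_sym ne => /(_ isT) /and4P [h1 h2 h3 h4].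
  by case: hp => hp; [move: h1|move: h2]; rewrite hp eqxx.
- have := lok_disj2 hL hc he; rewrite eq_sym ne => /(_ isT) /and4P [h1 h2 h3 h4].
  by case: hp => hp; [move: h3|move: h4]; rewrite hp eqxx.
Qed.

Lemma lsz_filter L s P : lsz L s -> lsz (filter P L) s.
Proof. by move=> h; apply/allP => c; rewrite mem_filter => /andP [_ hc]; move/allP: h; apply. Qed.

Lemma layer_pair L s c : lok L -> lsz L s -> c \in L ->
  val_at (apply_layer s L) c.1 = val_at s c.1 && val_at s c.2 /\
  val_at (apply_layer s L) c.2 = val_at s c.1 || val_at s c.2.
Proof.
move=> hL hs hc.
have hcc := lok_in hL hc.
have [u1 u2] := unused_filter hL hc.
have hf : all cok (filter (predC1 c) L) by move: (filter_lok (predC1 c) hL); rewrite /lok => /andP [].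
case/andP: (hcc) => c0 c1.
have c2 : 0 < c.2 by apply: ltn_trans c1.
rewrite (layer_extract hL hs hc) !layer_unused_val //.
rewrite /val_at !nth_comp // (predn_neq c0 c1) eqxx.
by rewrite eqxx.
Qed.

Definition le01 (s t : seq bool) := forall k, nth false s k ==> nth false t k.

Lemma comp_mono s t c : cok c -> le01 s t -> le01 (apply_comp s c) (apply_comp t c).
Proof.
move=> hc hst k; rewrite !nth_comp // /val_at.
have h1 := hst c.1.-1; have h2 := hst c.2.-1; have h3 := hst k.
case: eqP => _; first by move: h1 h2; do 4 case: (nth _ _ _).
case: eqP => _ //; by move: h1 h2; do 4 case: (nth _ _ _).
Qed.

Lemma layer_mono L s t : all cok L -> le01 s t -> le01 (apply_layer s L) (apply_layer t L).
Proof.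
elim: L s t => [|c L IH] s t //= /andP [hc hL] hst.
by apply: IH => //; apply: comp_mono.
Qed.

Lemma layer_sorted L s : all cok L -> lsz L s -> sorted01 s -> apply_layer s L = s.
Proof.
elim: L => [|c L IH] //= /andP [hc hL] /andP [hcs hLs] hs.
rewrite /apply_layer /= comp_id //; first exact: IH.
case/andP: hc => c0 c1.
by rewrite /val_at; apply: sorted_le => //; lia.
Qed.

Fixpoint phi (s : seq bool) : nat := if s is b :: s' then b * size s' + phi s' else 0.

Definition swap (x : seq bool) k := set_nth false (set_nth false x k false) k.+1 true.

Lemma phi_swap x k : k.+1 < size x -> nth false x k -> ~~ nth false x k.+1 -> phi (swap x k) < phi x.
Proof.
elim: x k => [|b x IH] [|k] //=.
  case: x IH => [|b' x] //= _ _ -> /negPf -> /=; lia.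
move=> hk h1 h2; rewrite /swap /= !size_set_nth.
have := IH k hk h1 h2; rewrite /swap.
have -> : maxn k.+2 (maxn k.+1 (size x)) = size x by lia.
lia.
Qed.

Lemma size_swap x k : k.+1 < size x -> size (swap x k) = size x.
Proof. move=> h; rewrite /swap !size_set_nth; lia. Qed.

Lemma count_swap x k : k.+1 < size x -> nth false x k -> ~~ nth false x k.+1 ->
  count negb (swap x k) = count negb x.
Proof.
move=> hk h1 h2.
have e1 := @cnt_set_nth negb x k false (ltnW hk).
have e2 := @cnt_set_nth negb (set_nth false x k false) k.+1 true.
rewrite size_set_nth nth_set_nth /= in e2.
have hh : k.+1 < maxn k.+1 (size x) by lia.
move: (e2 hh); rewrite eqn_leq ltnn /= (negbTE h2) h1 /= in e1 *.
rewrite /swap; lia.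
Qed.

Section Band.
Variables (n : nat) (F : seq bool -> seq bool) (L : layer) (i j : nat).
Hypothesis Fsize : forall x, size x = n -> size (F x) = n.
Hypothesis Fmono : forall x y, size x = n -> size y = n -> le01 x y -> le01 (F x) (F y).
Hypothesis Fcount : forall x, size x = n -> count negb (F x) = count negb x.
Hypothesis Fsort : forall x, size x = n -> sorted01 x -> F x = x.
Hypothesis hL : lok L.
Hypothesis hLn : forall c, c \in L -> c.2 <= n.
Hypothesis Gsort : forall x, size x = n -> sorted01 (apply_layer (F x) L).
Hypothesis hij : (i, j) \in L.
Hypothesis hne : j != i.+1.

Let lszF x : size x = n -> lsz L (F x).
Proof. by move=> hx; apply/allP => c hc; rewrite Fsize // hLn. Qed.

Let hcij : cok (i, j).
Proof. exact: lok_in hL hij. Qed.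

Let hjn : j <= n.
Proof. exact: (hLn hij). Qed.

Let hallcok : all cok L.
Proof. by move: hL; rewrite /lok => /andP []. Qed.

Let Gval x : size x = n ->
  val_at (apply_layer (F x) L) i = (count negb x <= i.-1) /\
  val_at (apply_layer (F x) L) j = (count negb x <= j.-1).
Proof.
move=> hx; case/andP: hcij => /= i0 ij.
have hs : size (apply_layer (F x) L) = n by rewrite size_layer // ?Fsize // lszF.
have hc : count negb (apply_layer (F x) L) = count negb x by rewrite count_layer // ?Fcount // lszF.
by rewrite /val_at !sorted_nth ?hc ?hs ?Gsort //; lia.
Qed.

Let band_val y : size y = n -> i <= count negb y < j -> val_at (F y) j = ~~ val_at (F y) i.
Proof.
move=> hy /andP [h1 h2].
have [p1 p2] := layer_pair hL (lszF hy) hij.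
have [g1 g2] := Gval hy.
case/andP: hcij => /= i0 ij.
move: p1 p2; rewrite g1 g2 /=.
have -> : (count negb y <= i.-1) = false by apply/negbTE; rewrite -ltnNge; lia.
have -> : (count negb y <= j.-1) = true by apply/idP; lia.
by case: (val_at _ i); case: (val_at _ j).
Qed.

Let band_eq y y' : size y = n -> size y' = n -> le01 y y' ->
  i <= count negb y < j -> i <= count negb y' < j -> val_at (F y) i = val_at (F y') i.
Proof.
move=> hy hy' hle b1 b2.
have m := Fmono hy hy' hle.
have mi := m i.-1; have mj := m j.-1.
move: (band_val hy b1) (band_val hy' b2); rewrite /val_at => e1 e2.
move: mi mj; rewrite e1 e2.
by case: (nth _ _ i.-1); case: (nth _ _ i.-1).
Qed.

Let main_claim : forall m x, phi x <= m -> size x = n -> i <= count negb x < j ->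
  val_at (F x) i = false.
Proof.
case/andP: hcij => /= i0 ij.
have j2 : i.+2 <= j by move: hne ij; clear; lia.
elim=> [|m IH] x hphi hx hb.
all: case: (boolP (sorted01 x)) => hs.
- rewrite Fsort // /val_at sorted_nth //; last by lia.
  by apply/negbTE; rewrite -ltnNge; lia.
- exfalso; move/negP: hs; apply; apply/(sortedP false) => k hk.
  apply: contraT => hn.
  have h1 : nth false x k by move: hn; case: (nth _ _ k).
  have h2 : ~~ nth false x k.+1 by move: hn; case: (nth _ _ k.+1); case: (nth _ _ k).
  by have := phi_swap hk h1 h2; lia.
- rewrite Fsort // /val_at sorted_nth //; last by lia.
  by apply/negbTE; rewrite -ltnNge; lia.
have [k hk] : exists k, ~ (k.+1 < size x -> implb (nth false x k) (nth false x k.+1)).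
  apply: not_all_ex_not => H; apply: (negP hs); exact/(sortedP false).
have hk1 : k.+1 < size x by case: (ltnP k.+1 (size x)) => // h; exfalso; apply: hk => h'; lia.
have hn : ~~ implb (nth false x k) (nth false x k.+1) by apply/negP => h; apply: hk.
have h1 : nth false x k by move: hn; case: (nth _ _ k).
have h2 : ~~ nth false x k.+1 by move: hn; case: (nth _ _ k.+1); case: (nth _ _ k).
have hx' : size (swap x k) = n by rewrite size_swap.
have cx' : count negb (swap x k) = count negb x by rewrite count_swap.
have IHx' : val_at (F (swap x k)) i = false.
  apply: IH; rewrite ?cx' //; have := phi_swap hk1 h1 h2; lia.
set c := count negb x in hb cx'.
case: (ltnP c.+1 j) => hc.
- set y := set_nth false x k false.
  have hy : size y = n by rewrite size_set_nth; lia.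
  have cy : count negb y = c.+1.
    have := @cnt_set_nth negb x k false (ltnW hk1); rewrite h1 /=; rewrite -/y -/c; lia.
  have by' : i <= count negb y < j by rewrite cy; lia.
  have le1 : le01 y x.
    move=> q; rewrite ?/swap !nth_set_nth /= ?nth_set_nth /=; do ! case: (_ == _); by rewrite /= ?implybb ?implybT.
  have le2 : le01 y (swap x k).
    move=> q; rewrite ?/swap !nth_set_nth /= ?nth_set_nth /=; do ! case: (_ == _); by rewrite /= ?implybb ?implybT.
  have bx' : i <= count negb (swap x k) < j by rewrite cx'.
  rewrite -(band_eq hy hx le1 by' hb) (band_eq hy hx' le2 by' bx').
  exact: IHx'.
- set y := set_nth false x k.+1 true.
  have hy : size y = n by rewrite size_set_nth; lia.
  have cy : count negb y = c.-1.
    have := @cnt_set_nth negb x k.+1 true hk1; rewrite (negbTE h2) /=; rewrite -/y -/c; lia.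
  have by' : i <= count negb y < j by rewrite cy; lia.
  have le1 : le01 x y.
    move=> q; rewrite ?/swap !nth_set_nth /= ?nth_set_nth /=; do ! case: (_ == _); by rewrite /= ?implybb ?implybT.
  have le2 : le01 (swap x k) y.
    move=> q; rewrite ?/swap !nth_set_nth /= ?nth_set_nth /=; do ! case: (_ == _); by rewrite /= ?implybb ?implybT.
  have bx' : i <= count negb (swap x k) < j by rewrite cx'.
  rewrite (band_eq hx hy le1 hb by') -(band_eq hx' hy le2 bx' by').
  exact: IHx'.
Qed.

Lemma band_result x : size x = n -> val_at (F x) i ==> val_at (F x) j.
Proof.
move=> hx; apply/implyP => hi; apply: contraT => hj.
have [p1 p2] := layer_pair hL (lszF hx) hij.
have [g1 g2] := Gval hx.
case/andP: hcij => /= i0 ij.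
move: p1 p2; rewrite g1 g2 hi (negbTE hj) /= => e1 e2.
have b : i <= count negb x < j.
  move/negbT: e1; rewrite -ltnNge => e1'.
  have e2' : count negb x <= j.-1 by rewrite e2.
  apply/andP; split; lia.
by move: (main_claim (leqnn _) hx b); rewrite hi.
Qed.
End Band.

Lemma layer_ok_lok n L : layer_ok n L -> lok L /\ (forall c, c \in L -> c.2 <= n).
Proof.
rewrite /layer_ok /lok => /andP [/allP h hu]; rewrite hu andbT; split.
  by apply/allP => c /h; rewrite /comparator_ok /cok => /andP [/andP [-> ->] _].
by move=> c /h /andP [_ ->].
Qed.

Lemma lsz_n n L s : layer_ok n L -> size s = n -> lsz L s.
Proof. by move=> /layer_ok_lok [_ h] hs; apply/allP => c /h; rewrite hs. Qed.

Lemma allcok n L : layer_ok n L -> all cok L.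
Proof. by move=> /layer_ok_lok [/andP [] ]. Qed.

Lemma size_layer_n n L s : layer_ok n L -> size s = n -> size (apply_layer s L) = n.
Proof. by move=> hL hs; rewrite size_layer ?(allcok hL) ?(lsz_n hL). Qed.

Lemma run_props n Q : network_ok n Q ->
  [/\ forall x, size x = n -> size (run Q x) = n,
      forall x, size x = n -> count negb (run Q x) = count negb x,
      forall x y, le01 x y -> le01 (run Q x) (run Q y) &
      forall x, size x = n -> sorted01 x -> run Q x = x].
Proof.
elim: Q => [|L Q IH] /=; first by split.
move=> /andP [hL hQ]; have [h1 h2 h3 h4] := IH hQ.
split.
- by move=> x hx; rewrite /run /= h1 // (size_layer_n hL).
- by move=> x hx; rewrite /run /= h2 ?(size_layer_n hL) // count_layer ?(allcok hL) ?(lsz_n hL).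
- by move=> x y hxy; apply: h3; apply: layer_mono (allcok hL) hxy.
- by move=> x hx hs; rewrite /run /= layer_sorted ?(allcok hL) ?(lsz_n hL) //; apply: h4.
Qed.

Definition adj (L : layer) := all (fun c : comparator => c.2 == c.1.+1) L.

Lemma adj_in L c : adj L -> c \in L -> c.2 = c.1.+1.
Proof. by move=> /allP h /h /eqP. Qed.

Lemma upper_a n L w a : layer_ok n L -> adj L -> size w = n -> 0 < a -> a <= n ->
  exists a', [/\ val_at w a ==> val_at (apply_layer w L) a', a <= a' <= n, a' <= a.+1 &
     (a' = a.+1 -> (a, a.+1) \in L)].
Proof.
move=> hL hA hw a0 an.
have [lk hLn] := layer_ok_lok hL.
have lz := lsz_n hL hw.
case: (boolP (used L a)) => ua.
  have [c hc [ea|ea]] := usedP ua.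
  - have e2 := adj_in hA hc.
    have [p1 p2] := layer_pair lk lz hc.
    have cn := hLn _ hc.
    exists c.2; split.
    + by rewrite p2 -ea; case: (val_at w a).
    + by clear -ea e2 cn; apply/andP; split; lia.
    + by clear -ea e2; lia.
    + move=> _; have -> : (a, a.+1) = c by rewrite ea -e2; case: (c).
      exact: hc.
  - have [p1 p2] := layer_pair lk lz hc.
    exists a; split.
    + by rewrite ea p2; case: (val_at w c.2); rewrite ?orbT.
    + by rewrite leqnn an.
    + by [].
    + by move=> e; exfalso; clear -e; lia.
exists a; split; first by rewrite layer_unused_val ?(allcok hL) // implybb.
- by rewrite leqnn an.
- by [].
- by move=> e; exfalso; clear -e; lia.
Qed.

Lemma lower_b n L w b : layer_ok n L -> adj L -> size w = n -> 0 < b -> b <= n ->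
  exists b', [/\ val_at (apply_layer w L) b' ==> val_at w b, 0 < b' <= b, b <= b'.+1 &
     (b'.+1 = b -> (b', b) \in L)].
Proof.
move=> hL hA hw b0 bn.
have [lk hLn] := layer_ok_lok hL.
have lz := lsz_n hL hw.
case: (boolP (used L b)) => ub.
  have [c hc [eb|eb]] := usedP ub.
  - have [p1 p2] := layer_pair lk lz hc.
    exists b; split.
    + by rewrite eb p1; case: (val_at w c.1); case: (val_at w c.2).
    + by rewrite leqnn b0.
    + by [].
    + by move=> e; exfalso; clear -e; lia.
  - have e2 := adj_in hA hc.
    have [p1 p2] := layer_pair lk lz hc.
    have c0 : 0 < c.1 by case/andP: (lok_in lk hc).
    exists c.1; split.
    + by rewrite p1 eb; case: (val_at w c.1); case: (val_at w c.2).
    + by rewrite c0 /= eb e2.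
    + by rewrite eb e2.
    + move=> _; have -> : (c.1, b) = c by rewrite eb; case: (c).
      exact: hc.
exists b; split; first by rewrite layer_unused_val ?(allcok hL) // implybb.
- by rewrite leqnn b0.
- by [].
- by move=> e; exfalso; clear -e; lia.
Qed.

Lemma lemK n L w a b : layer_ok n L -> adj L -> size w = n ->
  sorted01 (apply_layer w L) -> 0 < a -> a < b -> b <= n -> (a, b) \notin L ->
  val_at w a ==> val_at w b.
Proof.
move=> hL hA hw hs a0 ab bn nab.
have an : a <= n by apply: leq_trans (ltnW ab) bn.
have b0 : 0 < b by apply: leq_ltn_trans ab.
have [a' [ha1 ha2 ha4 ha3]] := upper_a hL hA hw a0 an.
have [b' [hb1 hb2 hb4 hb3]] := lower_b hL hA hw b0 bn.
have hso : size (apply_layer w L) = n by rewrite (size_layer_n hL).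
have a'b' : a' <= b'.
  case/andP: ha2 => h1 h2; case/andP: hb2 => h3 h4.
  case: (leqP a' b') => // h.
  have ea' : a' = a.+1 by clear -h1 h4 h ab ha4 hb4; lia.
  have eb' : b'.+1 = b by clear -h1 h4 h ab h3 ha4 hb4; lia.
  have ebb : b = a.+1 by clear -h1 h4 h ab h3 ha4 hb4; lia.
  by move: nab; rewrite ebb (ha3 ea').
have hsrt : val_at (apply_layer w L) a' ==> val_at (apply_layer w L) b'.
  case/andP: ha2 => h1 h2; case/andP: hb2 => h3 h4.
  rewrite /val_at; apply: sorted_le => //; clear -a0 h1 h2 h3 h4 a'b' hso bn; lia.
by move: ha1 hb1 hsrt; do 4 case: (val_at _ _).
Qed.

Lemma nth_nil_mem (T : eqType) (a : T) k : a \in nth [::] [::] k = false.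
Proof. by rewrite ?nth_nil ?in_nil. Qed.

Lemma blocks_head n L f i a : a \in nth [::] (blocks_aux f i n L) 0 -> a = i \/ a = i.+1.
Proof.
case: f => [|f] /=; first by rewrite ?nth_nil ?in_nil.
case: ltnP => _; first by rewrite ?nth_nil ?in_nil.
case: ifP => _ /=; rewrite !inE.
  by case/orP => /eqP ->; [left|right].
by move/eqP ->; left.
Qed.

Lemma blocks_bound n L f : (forall c, c \in L -> c.2 <= n) ->
  forall i k a, a \in nth [::] (blocks_aux f i n L) k -> i <= a <= n.
Proof.
move=> hLn; elim: f => [|f IH] i k a /=; first by rewrite ?nth_nil ?in_nil.
case: ltnP => hi; first by rewrite ?nth_nil ?in_nil.
case: ifP => hc; case: k => [|k] /=.
- rewrite !inE => /orP [] /eqP ->; first by rewrite leqnn hi.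
  by rewrite leqnSn /=; apply: (hLn _ hc).
- by move/IH; clear; lia.
- by rewrite inE => /eqP ->; rewrite leqnn hi.
- by move/IH; clear; lia.
Qed.

Lemma blocks_consec n L f : lok L -> adj L ->
  forall i k a b, a \in nth [::] (blocks_aux f i n L) k ->
    b \in nth [::] (blocks_aux f i n L) k.+1 -> a < b /\ (a, b) \notin L.
Proof.
move=> lk hA; elim: f => [|f IH] i k a b /=; first by rewrite ?nth_nil ?in_nil.
case: ltnP => hi; first by rewrite ?nth_nil ?in_nil.
case: ifP => hc; case: k => [|k] /=.
- rewrite !inE => ha /blocks_head hb.
  have ab : a < b by case/orP: ha => /eqP ->; case: hb => ->; clear; lia.
  split => //; apply/negP => hab.
  have e := adj_in hA hab; rewrite /= in e; subst b.
  case/orP: ha => /eqP ea; subst a.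
    by case: hb; clear; lia.
  have hne : (i.+1, i.+2) != (i, i.+1) by apply/eqP; case; clear; lia.
  have := lok_disj2 lk hab hc hne; rewrite /disj /= eqxx.
  by rewrite !andbF.
- by apply: IH.
- rewrite !inE => /eqP -> /blocks_head hb; split; first by case: hb => ->; clear; lia.
  case: hb => ->; first by rewrite hc.
  apply/negP => h; have := adj_in hA h; rewrite /=; clear; lia.
- by apply: IH.
Qed.

Definition good n Q Lp L := [/\ layer_ok n Lp, layer_ok n L &
  forall x, size x = n -> sorted01 (apply_layer (apply_layer (run Q x) Lp) L)].

Lemma count_lt (T : eqType) (P R : pred T) s a : (forall x, P x -> R x) -> a \in s -> R a -> ~~ P a ->
  count P s < count R s.
Proof.
move=> hPR; elim: s => [|y s IH] //=; rewrite inE => /orP [/eqP <-|ha] hRa hPa.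
  rewrite hRa (negbTE hPa) add0n add1n ltnS; exact: sub_count.
have := IH ha hRa hPa; case: (boolP (P y)) => py; first by rewrite (hPR _ py); lia.
by case: (R y) => /=; lia.
Qed.

Lemma comp_other w c p : cok c -> 0 < p -> p != c.1 -> p != c.2 -> val_at (apply_comp w c) p = val_at w p.
Proof.
case/andP=> c0 c1 p0 n1 n2; rewrite {1}/val_at nth_comp ?c0 ?c1 //.
have -> : (p.-1 == c.2.-1) = false by apply/eqP => e; move/eqP: n2; apply; clear -e p0 c0 c1; lia.
have -> : (p.-1 == c.1.-1) = false by apply/eqP => e; move/eqP: n1; apply; clear -e p0 c0; lia.
by [].
by rewrite /cok c0 c1.
Qed.

Lemma layer_ok_filter n L P : layer_ok n L -> layer_ok n (filter P L).
Proof.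
move=> hL; have [lk _] := layer_ok_lok hL.
have := filter_lok P lk; rewrite /lok /layer_ok => /andP [_ ->]; rewrite andbT.
move: hL => /andP [ha _]; apply/allP => c; rewrite mem_filter => /andP [_ hc].
by move/allP: ha; apply.
Qed.

Lemma layer_filter_eq L w (P : pred comparator) : lok L -> lsz L w ->
  (forall c, c \in L -> ~~ P c -> val_at w c.1 ==> val_at w c.2) ->
  apply_layer w L = apply_layer w (filter P L).
Proof.
elim: L w => [|c0 L IH] w //= lk /andP [hc0 hLw] hyp.
have [cc0 lk' u1 u2 _] := lok_cons lk.
case: (boolP (P c0)) => pc0.
  rewrite /apply_layer /=.
  have := IH (apply_comp w c0); rewrite /apply_layer => -> //.
  - by rewrite /lsz size_comp.
  move=> c hc pc; have d := lok_disj lk hc.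
  case/and4P: d => d1 d2 d3 d4.
  have cc := lok_in lk' hc; case/andP: (cc) => cc1 cc2.
  rewrite !comp_other //; first by apply: hyp => //; rewrite inE hc orbT.
  - by apply: ltn_trans cc2.
  - by rewrite eq_sym.
  - by rewrite eq_sym.
  - by rewrite eq_sym.
  - by rewrite eq_sym.
rewrite /apply_layer /= comp_id //; last by apply: hyp => //; rewrite inE eqxx.
apply: IH => // c hc pc; by apply: hyp => //; rewrite inE hc orbT.
Qed.

Lemma norm1 n Q Lp L : network_ok n Q -> good n Q Lp L ->
  good n Q Lp (filter (fun c : comparator => c.2 == c.1.+1) L).
Proof.
move=> hQ [hLp hL hs]; split => //; first exact: layer_ok_filter.
have [r1 r2 r3 r4] := run_props hQ.
have [lk hLn] := layer_ok_lok hL.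
set F := fun x => apply_layer (run Q x) Lp.
have Fsize x : size x = n -> size (F x) = n by move=> hx; rewrite /F (size_layer_n hLp) ?r1.
move=> x hx; rewrite -layer_filter_eq //; first exact: hs.
- by apply: lsz_n hL _; apply: Fsize.
move=> c hc nadj; rewrite -/(F x).
have -> : c = (c.1, c.2) by case: (c).
apply: (band_result (n := n) (L := L)) => //.
- by move=> y z hy hz hyz; apply: layer_mono (allcok hLp) _; apply: r3.
- by move=> y hy; rewrite /F count_layer ?(allcok hLp) ?(lsz_n hLp) ?r1 ?r2.
- by move=> y hy hsy; rewrite /F r4 // layer_sorted ?(allcok hLp) ?(lsz_n hLp).
- by rewrite -surjective_pairing.
Qed.

Lemma ch_rcons L c : layer_channels (rcons L c) = layer_channels L ++ [:: c.1; c.2].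
Proof. by rewrite /layer_channels map_rcons flatten_rcons. Qed.

Lemma used_rcons L c p : used (rcons L c) p = [|| used L p, p == c.1 | p == c.2].
Proof. by rewrite /used ch_rcons mem_cat !inE. Qed.

Lemma apply_layer_rcons w L c : apply_layer w (rcons L c) = apply_comp (apply_layer w L) c.
Proof. by rewrite /apply_layer foldl_rcons. Qed.

Definition mu n L := count (fun p => ~~ used L p) (iota 1 n).

Lemma norm2 n Q Lp : network_ok n Q -> forall m L, mu n L <= m -> good n Q Lp L -> adj L ->
  exists L', good n Q Lp L' /\ llnf n L'.
Proof.
move=> hQ; elim=> [|m IH] L hm hg hA.
all: case: (boolP (all (fun i => used L i || used L i.+1) (iota 1 n.-1))) => hall.
- by exists L; split => //; apply/andP; split.
- exfalso; have [i hi] := allPn hall; rewrite negb_or => /andP [u1 u2].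
  move: hi; rewrite mem_iota => /andP [i1 i2].
  have : 0 < mu n L.
    apply: (@leq_trans (count (fun _ => false) (iota 1 n)).+1); first by rewrite count_pred0.
    apply: count_lt (i) _ _ _ _ => //; rewrite mem_iota i1 /=; clear -i2; lia.
  by clear -hm; lia.
- by exists L; split => //; apply/andP; split.
have [i hi] := allPn hall; rewrite negb_or => /andP [u1 u2].
move: hi; rewrite mem_iota => /andP [i1 i2].
have iin : i.+1 <= n by clear -i2 i1; lia.
case: hg => hLp hL hs.
set L2 := rcons L (i, i.+1).
have hL2 : layer_ok n L2.
  move: hL; rewrite /layer_ok /L2 ch_rcons all_rcons => /andP [-> hu].
  rewrite /comparator_ok /= i1 ltnSn iin /= cat_uniq hu /= !inE negb_or.
  rewrite orbF; move: u1 u2; rewrite /used => -> -> /=; apply/negP; clear; lia.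
apply: (IH L2).
- rewrite -ltnS; apply: leq_trans hm; apply: count_lt (i) _ _ _ _ => //.
  + by move=> p; rewrite used_rcons !negb_or => /andP [].
  + by rewrite mem_iota i1 /=; clear -iin; lia.
  + by rewrite used_rcons eqxx !orbT.
- split => // x hx; rewrite /L2 apply_layer_rcons.
  have [r1 _ _ _] := run_props hQ.
  have hw : size (apply_layer (run Q x) Lp) = n by rewrite (size_layer_n hLp) ?r1.
  have ho : size (apply_layer (apply_layer (run Q x) Lp) L) = n by rewrite (size_layer_n hL).
  rewrite comp_id //; first exact: hs.
  - by rewrite /cok /= i1 ltnSn.
  - by rewrite ho.
  - rewrite /val_at /=; apply: sorted_le; first exact: hs.
    + by clear; lia.
    + by rewrite ho; clear -iin i1; lia.
- by rewrite /adj /L2 all_rcons /= eqxx.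
Qed.

Definition cosat n (Lp L : layer) :=
  let bs := blocks n L in
  let has_unused (B : seq nat) := has (fun i => ~~ used Lp i) B in
  [/\ llnf n L,
      (forall k, k.+1 < size bs ->
         ~~ (has_unused (nth [::] bs k) && has_unused (nth [::] bs k.+1)))
    & (forall i, (i, i.+1) \in L -> ~~ used Lp i -> ~~ used Lp i.+1 ->
         (1 < i -> used L i.-1) /\ (i.+2 <= n -> used L i.+2))].

Lemma layer_ok_cons n c L : comparator_ok n c -> layer_ok n L -> ~~ used L c.1 -> ~~ used L c.2 ->
  c.1 != c.2 -> layer_ok n (c :: L).
Proof.
move=> hc /andP [ha hu] u1 u2 ne.
by rewrite /layer_ok ch_cons /= hc ha /= inE negb_or ne -!/(used L _) u1 u2 hu.
Qed.

Lemma cok_of n c : comparator_ok n c -> cok c.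
Proof. by rewrite /comparator_ok /cok => /andP [/andP [-> ->] _]. Qed.

Lemma mu_cons n L c : 0 < c.1 -> c.1 <= n -> ~~ used L c.1 -> mu n (c :: L) < mu n L.
Proof.
move=> c0 cn u; apply: count_lt (c.1) _ _ _ _ => //.
- by move=> p; rewrite used_cons !negb_or => /and3P [].
- by rewrite mem_iota c0 /=; clear -cn; lia.
- by rewrite used_cons eqxx.
Qed.

Lemma stepA n Q Lp L a b : network_ok n Q -> good n Q Lp L -> adj L ->
  0 < a -> a < b -> b <= n -> (a, b) \notin L -> ~~ used Lp a -> ~~ used Lp b ->
  good n Q ((a, b) :: Lp) L.
Proof.
move=> hQ [hLp hL hs] hA a0 ab bn nab ua ub.
have [r1 _ _ _] := run_props hQ.
split => //.
  apply: layer_ok_cons => //=; last by rewrite neq_ltn ab.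
  by rewrite /comparator_ok /= a0 ab bn.
move=> x hx; rewrite /apply_layer /= -/(apply_layer _ Lp).
have hv := r1 x hx.
have cab : cok (a, b) by rewrite /cok /= a0 ab.
rewrite comp_id //; first exact: hs.
- by rewrite hv.
rewrite /= -(layer_unused_val _ (allcok hLp) a0 ua) -(layer_unused_val _ (allcok hLp) _ ub); last by clear -a0 ab; lia.
apply: lemK hL hA _ (hs x hx) a0 ab bn nab.
by rewrite (size_layer_n hLp).
Qed.

Lemma stepB n Q Lp L c d : network_ok n Q -> good n Q Lp L -> c \in L ->
  ~~ used Lp c.1 -> ~~ used Lp c.2 -> comparator_ok n d ->
  ~~ used (filter (predC1 c) L) d.1 -> ~~ used (filter (predC1 c) L) d.2 ->
  good n Q (c :: Lp) (d :: filter (predC1 c) L).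
Proof.
move=> hQ [hLp hL hs] hc u1 u2 hd v1 v2.
have [r1 _ _ _] := run_props hQ.
have [lkL hLn] := layer_ok_lok hL.
have [lkLp _] := layer_ok_lok hLp.
have hcok : comparator_ok n c by move: hL => /andP [/allP h _]; apply: h.
have cc := cok_of hcok.
have dc := cok_of hd.
have dne : d.1 != d.2 by case/andP: dc => _ h; rewrite neq_ltn h.
have cne : c.1 != c.2 by case/andP: cc => _ h; rewrite neq_ltn h.
split.
- exact: layer_ok_cons.
- by apply: layer_ok_cons => //; apply: layer_ok_filter.
move=> x hx.
have hv := r1 x hx.
set w := apply_layer (run Q x) Lp.
have hw : size w = n by rewrite /w (size_layer_n hLp).
have c2 : c.2 <= n by move: hcok => /andP [].
have d2 : d.2 <= n by move: hd => /andP [].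
have e1 : apply_layer (run Q x) (c :: Lp) = apply_comp w c.
  rewrite /apply_layer /= -/(apply_layer _ Lp) layer_comm // ?hv //.
  exact: lsz_n hLp hv.
set w' := apply_comp w c.
have hw' : size w' = n by rewrite /w' size_comp // hw.
have e2 : apply_layer w L = apply_layer w' (filter (predC1 c) L).
  by apply: layer_extract => //; apply: lsz_n hL hw.
have hf := layer_ok_filter (predC1 c) hL.
have srt := hs x hx; rewrite -/w e2 in srt.
have ho : size (apply_layer w' (filter (predC1 c) L)) = n by rewrite (size_layer_n hf).
rewrite e1 /apply_layer /= -/(apply_layer _ (filter _ _)) comp_id // //.
- by rewrite -/w' hw'.
case/andP: (dc) => d0 d01.
rewrite -(layer_unused_val _ (allcok hf) d0 v1) -(layer_unused_val _ (allcok hf) _ v2); last by clear -d0 d01; lia.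
rewrite /val_at; apply: sorted_le => //; rewrite -/w' ?ho; clear -d0 d01 d2; lia.
Qed.

Lemma cok_mk n a b : 0 < a -> a < b -> b <= n -> comparator_ok n (a, b).
Proof. by move=> h1 h2 h3; rewrite /comparator_ok /= h1 h2 h3. Qed.

Lemma step n Q Lp L : network_ok n Q -> good n Q Lp L -> llnf n L -> ~ cosat n Lp L ->
  exists Lp' L', good n Q Lp' L' /\ mu n Lp' < mu n Lp.
Proof.
move=> hQ hg hll hns.
have hA : adj L by case/andP: hll.
have [hLp hL hs] := hg.
have [lkL hLn] := layer_ok_lok hL.
have [nB|nC] : (~ forall k, k.+1 < size (blocks n L) ->
         ~~ (has (fun i => ~~ used Lp i) (nth [::] (blocks n L) k) &&
             has (fun i => ~~ used Lp i) (nth [::] (blocks n L) k.+1))) \/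
  (~ forall i, (i, i.+1) \in L -> ~~ used Lp i -> ~~ used Lp i.+1 ->
         (1 < i -> used L i.-1) /\ (i.+2 <= n -> used L i.+2)).
  apply: NNPP => h; apply: hns; split => //.
  - by apply: NNPP => h'; apply: h; left.
  - by apply: NNPP => h'; apply: h; right.
- have [k hk] := not_all_ex_not _ _ nB.
  have hk1 : k.+1 < size (blocks n L).
    by case: (ltnP k.+1 (size (blocks n L))) => // h; exfalso; apply: hk => h'; clear -h h'; lia.
  have hh : has (fun i => ~~ used Lp i) (nth [::] (blocks n L) k) &&
            has (fun i => ~~ used Lp i) (nth [::] (blocks n L) k.+1).
    by apply: NNPP => h; apply: hk => _; apply/negP.
  case/andP: hh => /hasP [a ha ua] /hasP [b hb ub].
  have [ab nab] := blocks_consec lkL hA ha hb.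
  have /andP [a1 an] := blocks_bound hLn ha.
  have /andP [b1 bn] := blocks_bound hLn hb.
  exists ((a, b) :: Lp), L; split.
  + exact: stepA hQ hg hA a1 ab bn nab ua ub.
  + by apply: mu_cons.
- have [i hi] := not_all_ex_not _ _ nC.
  have [hc hr] : (i, i.+1) \in L /\
      ~ ((~~ used Lp i) -> ~~ used Lp i.+1 -> (1 < i -> used L i.-1) /\ (i.+2 <= n -> used L i.+2)).
    by split; [apply: NNPP => h; apply: hi => h'; case: (h h') | move=> h; apply: hi => _].
  have [u1 hr2] : ~~ used Lp i /\ ~ (~~ used Lp i.+1 -> (1 < i -> used L i.-1) /\ (i.+2 <= n -> used L i.+2)).
    by split; [apply: NNPP => h; apply: hr => h'; case: (h h') | move=> h; apply: hr => _].
  have [u2 hr3] : ~~ used Lp i.+1 /\ ~ ((1 < i -> used L i.-1) /\ (i.+2 <= n -> used L i.+2)).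
    by split; [apply: NNPP => h; apply: hr2 => h'; case: (h h') | move=> h; apply: hr2 => _].
  have hcok : comparator_ok n (i, i.+1) by move: hL => /andP [/allP h _]; apply: h.
  have := hcok; rewrite /comparator_ok /= => /andP [/andP [i0 _] i1n].
  have [uf1 uf2] := unused_filter lkL hc.
  rewrite /= in uf1 uf2.
  have mud : mu n ((i, i.+1) :: Lp) < mu n Lp.
    by apply: mu_cons => //=; clear -i1n; lia.
  have [[i1 ui]|[i2 ui]] : (1 < i /\ ~~ used L i.-1) \/ (i.+2 <= n /\ ~~ used L i.+2).
    apply: NNPP => h; apply: hr3; split.
    + by move=> h1; apply: NNPP => h2; apply: h; left; split => //; apply/negP.
    + by move=> h1; apply: NNPP => h2; apply: h; right; split => //; apply/negP.
  + exists ((i, i.+1) :: Lp), ((i.-1, i) :: filter (predC1 (i, i.+1)) L); split => //.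
    apply: stepB => //=.
    * by apply: cok_mk; clear -i1 i1n; lia.
    * by apply/negP => /used_filter; apply/negP.
  + exists ((i, i.+1) :: Lp), ((i.+1, i.+2) :: filter (predC1 (i, i.+1)) L); split => //.
    apply: stepB => //=.
    * by apply: cok_mk; clear -i2; lia.
    * by apply/negP => /used_filter; apply/negP.
Qed.

Lemma main_loop n Q : network_ok n Q -> forall m Lp L, mu n Lp <= m -> good n Q Lp L ->
  exists Lp' L', good n Q Lp' L' /\ cosat n Lp' L'.
Proof.
move=> hQ; elim=> [|m IH] Lp L hm hg.
all: have g1 := norm1 hQ hg.
all: have [L2 [g2 ll]] := norm2 hQ (leqnn _) g1 (filter_all _ _).
all: case: (classic (cosat n Lp L2)) => hc; first by exists Lp, L2.
all: have [Lp' [L' [g' hmu]]] := step hQ g2 ll hc.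
- by exfalso; clear -hm hmu; lia.
- by apply: (IH Lp' L') => //; clear -hm hmu; lia.
Qed.

Lemma run_cat2 Q Lp L x : run (Q ++ [:: Lp; L]) x = apply_layer (apply_layer (run Q x) Lp) L.
Proof. by rewrite /run foldl_cat. Qed.

Lemma last_cat2 (Q : network) Lp L : last_layer (Q ++ [:: Lp; L]) = L.
Proof.
rewrite /last_layer size_cat /= nth_cat.
have -> : (size Q + 2).-1 = (size Q).+1 by rewrite addn2.
by rewrite ltnNge leqnSn /= subSn // subnn.
Qed.

Lemma prev_cat2 (Q : network) Lp L : prev_layer (Q ++ [:: Lp; L]) = Lp.
Proof.
rewrite /prev_layer size_cat /= addn2 ltnS ltnS leq0n nth_cat.
by rewrite subn2 /= ltnn subnn.
Qed.

Lemma nth_all_nil n (C : network) k : network_ok n C -> n <= 1 -> nth [::] C k = [::].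
Proof.
move=> hC hn; case: (ltnP k (size C)) => hk; last by rewrite nth_default.
have := allP hC _ (mem_nth [::] hk); set L := nth _ _ _ => hL.
case: L hL => [|c L] //= /andP [/andP [hc _] _]; move: hc; rewrite /comparator_ok.
by move=> /andP [/andP [h1 h2] h3]; exfalso; clear -h1 h2 h3 hn; lia.
Qed.

Lemma one_true n L x : layer_ok n L -> size x = n -> 0 < n -> sorted01 (apply_layer x L) ->
  count negb x = n.-1 -> val_at x n = false -> exists2 c, c \in L & c.2 = n /\ val_at x c.1.
Proof.
move=> hL hx n0 hs hc hxn.
have [lk hLn] := layer_ok_lok hL.
have ho : size (apply_layer x L) = n by rewrite (size_layer_n hL).
have vo : val_at (apply_layer x L) n.
  rewrite /val_at sorted_nth // ?ho; last by clear -n0; lia.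
  by rewrite count_layer ?(allcok hL) ?(lsz_n hL) // hc.
case: (boolP (used L n)) => un; last by move: vo; rewrite layer_unused_val ?(allcok hL) // hxn.
have [c hcL [e|e]] := usedP un.
  have cn := hLn _ hcL; have := lok_in lk hcL; rewrite /cok => /andP [_ h].
  by have := leq_trans h cn; rewrite -e ltnn.
exists c => //; split => //.
have [_ p2] := layer_pair lk (lsz_n hL hx) hcL.
by move: vo; rewrite e p2 -e hxn orbF.
Qed.

Theorem theorem4 (n : nat) (C : network) :
  sorting_network n C ->
  exists N : network,
    [/\ sorting_network n N, depth N = depth C & co_saturated n N].
Proof.
rewrite /sorting_network => -[hC hsort].
have hsort' x : size x = n -> sorted01 (run C x).
  by move=> hx; have := hsort (Tuple (introT eqP hx)).
case: (leqP n 1) => hn.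
  exists C; split => //.
  rewrite /co_saturated /last_layer /prev_layer !(nth_all_nil _ hC hn).
  have -> : (if 1 < size C then [::] else [::]) = [::] :> layer by case: ifP.
  split.
  - by rewrite /llnf /=; case: n hn {hC hsort hsort'} => [|[|]].
  - by move=> k; case: n hn {hC hsort hsort'} => [|[|]].
  - by move=> i; rewrite in_nil.
case/lastP: C hC hsort hsort' => [|C1 L] hC hsort hsort'.
  exfalso; have := hsort' (true :: nseq n.-1 false); rewrite /= size_nseq.
  have -> : n.-1.+1 = n by clear -hn; lia.
  move=> /(_ erefl); rewrite /run /= /sorted01 /=.
  by case: n hn {hC hsort hsort'} => [|[|n]].
case/lastP: C1 hC hsort hsort' => [|Q Lp] hC hsort hsort'.
  have hL : layer_ok n L by move: hC; rewrite /network_ok /= andbT.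
  have hs x : size x = n -> sorted01 (apply_layer x L) by move=> hx; have := hsort' x hx.
  have n2 : n = 2.
    case: (ltnP 2 n) => h; last by clear -h hn; lia.
    exfalso.
    set x1 := true :: nseq n.-2.+1 false.
    have sx1 : size x1 = n by rewrite /= size_nseq; clear -h; lia.
    have [lk _] := layer_ok_lok hL.
    have cx1 : count negb x1 = n.-1 by rewrite /x1 /= count_nseq /= mul1n; clear -h; lia.
    have vx1 : val_at x1 n = false.
      rewrite /val_at; have -> : n.-1 = n.-2.+1 by clear -h; lia.
      by rewrite /x1 -[true :: _]/([:: true] ++ _) nth_cat nth_nseq; do 2 case: ifP => //.
    have [c1 hc1 [e1 v1]] := one_true hL sx1 (ltnW hn) (hs _ sx1) cx1 vx1.
    have f1 : c1.1 = 1.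
      have := lok_in lk hc1; rewrite /cok => /andP [c0 _].
      move: v1 c0; rewrite /val_at /x1; case: (c1.1) => [|[|k]] // hv _; move: hv.
      by rewrite -[true :: _]/([:: true] ++ _) nth_cat nth_nseq; do 2 case: ifP => //.
    set x2 := false :: true :: nseq (n - 2) false.
    have sx2 : size x2 = n by rewrite /= size_nseq; clear -h; lia.
    have cx2 : count negb x2 = n.-1 by rewrite /x2 /= count_nseq /= mul1n; clear -h; lia.
    have vx2 : val_at x2 n = false.
      rewrite /val_at /x2 -[false :: _]/([:: false; true] ++ _) nth_cat nth_nseq.
      case: ifP => [h'|_]; last by case: ifP.
      by exfalso; move: h'; rewrite /=; clear -h; lia.
    have [c2 hc2 [e2 v2]] := one_true hL sx2 (ltnW hn) (hs _ sx2) cx2 vx2.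
    have f2 : c2.1 = 2.
      have := lok_in lk hc2; rewrite /cok => /andP [c0 _].
      move: v2 c0; rewrite /val_at /x2; case: (c2.1) => [|[|[|k]]] // hv _; move: hv.
      by rewrite -[false :: _]/([:: false; true] ++ _) nth_cat nth_nseq; do 2 case: ifP => //.
    have ne : c1 != c2 by apply/eqP => ec; move: f1; rewrite ec f2.
    have := lok_disj2 lk hc1 hc2 ne; rewrite /disj e1 e2 eqxx.
    by rewrite !andbF.
  subst n; exists [:: [:: (1, 2)]]; split => //.
  - split => // x; case: x => [[|a [|b [|? ?]]] //= _].
    by rewrite /run /= /apply_layer /= /apply_comp /val_at /=; case: a; case: b.
  - rewrite /co_saturated /=; split => //.
    by move=> i; rewrite /last_layer /= inE => /eqP [ei _]; subst i; split.
have eC : rcons (rcons Q Lp) L = Q ++ [:: Lp; L] by rewrite -cats1 -cats1 -catA.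
rewrite eC in hC hsort hsort' *.
move: hC; rewrite /network_ok all_cat /= andbT => /and3P [hQ hLp hL].
have hg : good n Q Lp L by split => // x hx; rewrite -run_cat2; apply: hsort'.
have [Lp' [L' [[g1 g2 g3] hcs]]] := main_loop hQ (leqnn _) hg.
exists (Q ++ [:: Lp'; L']); split.
- split; first by rewrite /network_ok all_cat /= hQ g1 g2.
  by move=> x; rewrite run_cat2; apply: g3; rewrite size_tuple.
- by rewrite /depth !size_cat.
- by rewrite /co_saturated last_cat2 prev_cat2.
Qed.
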